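(* For every prime $p$, \[ \overline{M}(p)=p\,f(p)-1+\sum_{j=2}^{p} f\!\left(\left\lfloor \frac{p}{j}\right\rfloor\right). \]
   Context: For a nonempty finite set $A$ of positive integers, $(A)$ denotes the greatest common divisor of the elements of $A$. For $m\in\mathbb{N}$, $f(m)$ is the number of nonempty subsets $A\subseteq\{1,2,\ldots,m\}$ with $(A)=1$. For $n\in\mathbb{N}$, \[ \overline{M}(n)=\sum_{\substack{\emptyset\ne A\subseteq\{1,\ldots,n\}\\ \gcd((A),n)=1}}\gcd((A)-1,n), \] with the convention $\gcd(0,n)=n$. *)

(* Defs.v *)
From mathcomp Require Import all_boot.
Set Implicit Arguments. Unset Strict Implicit. Unset Printing Implicit Defensive.

(* Subsets of {1,...,m} are represented as sets A : {set 'I_m.+1} with 0 \notin A. *)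
Definition subsets_1m (m : nat) : {set {set 'I_m.+1}} :=
  [set A : {set 'I_m.+1} | (A != set0) && (ord0 \notin A)].

Definition gcdset (m : nat) (A : {set 'I_m.+1}) : nat :=
  \big[gcdn/0]_(i in A) (i : nat).

Definition f (m : nat) : nat :=
  #|[set A in subsets_1m m | gcdset A == 1]|.

(* Mbar(n) = sum over nonempty A of {1..n} with gcd((A),n)=1 of gcd((A)-1, n),
   with gcd(0,n) = n (which holds for gcdn). *)
Definition Mbar (n : nat) : nat :=
  \sum_(A in subsets_1m n | coprime (gcdset A) n) gcdn (gcdset A).-1 n.

(* Main.v *)
Require Import Defs.
From mathcomp Require Import all_boot all_algebra.
From mathcomp Require Import zify.

Lemma gcdset_dvd {m} {A : {set 'I_m.+1}} {i : 'I_m.+1} : i \in A -> gcdset A %| i.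
Proof. by move=> iA; rewrite /gcdset (biggcdn_inf i). Qed.

Section Bij.
Variables (m d : nat).
Hypothesis d0 : 0 < d.
Let q := m %/ d.
Definition hh (i : 'I_q.+1) : 'I_m.+1 := inord (i * d).
Lemma hhE i : (hh i : nat) = i * d.
Proof.
rewrite /hh inordK // ltnS; apply: leq_trans (leq_divM m d).
by rewrite leq_mul2r -ltnS ltn_ord orbT.
Qed.
Lemma hh_inj : injective hh.
Proof. by move=> i j /(congr1 val); rewrite /= !hhE => /eqP; rewrite eqn_pmul2r // => /eqP /val_inj. Qed.

Lemma gcdset_phi (B : {set 'I_q.+1}) : gcdset (hh @: B) = gcdset B * d.
Proof.
rewrite /gcdset big_imset /=; last by move=> i j _ _; apply: hh_inj.
under eq_bigr do rewrite hhE.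
apply/esym; apply: (big_morph (fun x => x * d)) => //.
by move=> x y; rewrite muln_gcdl.
Qed.

Lemma Ncount : #|[set A in subsets_1m m | gcdset A == d]| = f q.
Proof.
rewrite /f -(card_imset _ (imset_inj hh_inj)); apply: eq_card => A.
apply/idP/idP.
  rewrite inE => /andP[SA /eqP gA].
  set B := [set i | hh i \in A].
  have eA : A = hh @: B.
  apply/setP => j; apply/idP/imsetP.
    move=> jA; have dj : d %| j by rewrite -gA gcdset_dvd.
    have jq : j %/ d < q.+1 by rewrite ltnS leq_div2r // -ltnS.
    exists (Ordinal jq); last first.
      by apply: val_inj; rewrite /= hhE /= divnK.
    rewrite inE; suff -> : hh (Ordinal jq) = j by [].
    by apply: val_inj; rewrite /= hhE /= divnK.
  by move=> [i]; rewrite inE => hiA ->.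
  apply/imsetP; exists B => //.
  move: SA; rewrite !inE => /andP[nA n0]; rewrite -andbA; apply/and3P; split.
  - by apply: contra nA => /eqP B0; rewrite eA B0 imset0.
  - suff -> : hh ord0 = ord0 by [].
    by apply: val_inj; rewrite /= hhE.
  - by rewrite -(eqn_pmul2r d0) mul1n -gcdset_phi -eA gA.
case/imsetP => B BS ->; rewrite inE in BS; case/andP: BS => SB gB.
rewrite inE gcdset_phi (eqP gB) mul1n eqxx andbT.
move: SB; rewrite !inE => /andP[/set0Pn[i iB] n0].
apply/andP; split.
  by apply/set0Pn; exists (hh i); apply: imset_f.
apply/imsetP => -[j jB e].
have : (j : nat) * d = 0 by rewrite -hhE -e.
move/eqP; rewrite muln_eq0 (gtn_eqF d0) orbF => /eqP j0.
have ej : j = ord0 by apply: val_inj.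
by rewrite -ej jB in n0.
Qed.
End Bij.
Lemma gcdset_bounds {m} {A : {set 'I_m.+1}} : A \in subsets_1m m ->
  0 < gcdset A <= m.
Proof.
rewrite inE => /andP[/set0Pn[i iA] n0].
have i0 : 0 < i.
  rewrite lt0n; apply/negP => /eqP i0.
  have e : i = ord0 by apply: val_inj.
  by rewrite -e iA in n0.
have d := gcdset_dvd iA.
rewrite (dvdn_gt0 i0 d) /=.
exact: leq_trans (dvdn_leq i0 d) (leq_ord i).
Qed.
Lemma f1 : f 1 = 1.
Proof.
rewrite /f -[RHS](cards1 [set (@ord_max 1)]). apply: eq_card => A.
rewrite !inE; apply/idP/idP.
  move=> /andP[/andP[/set0Pn[i iA] n0] _].
  have Ai : forall j : 'I_2, (j \in A) = (j == ord_max).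
    move=> j; case: j => [[|[|]]] //= Hj.
      have -> : Ordinal Hj = ord0 by apply: val_inj.
      by rewrite (negbTE n0).
    have -> : Ordinal Hj = ord_max by apply: val_inj.
    rewrite eqxx; move: iA; case: i => [[|[|]]] //= Hi.
      have e : Ordinal Hi = ord0 by apply: val_inj.
      by rewrite e (negbTE n0).
    by have -> : Ordinal Hi = ord_max by apply: val_inj.
  by apply/eqP/setP => j; rewrite inE Ai.
move/eqP ->; rewrite /gcdset big_set1 /=.
apply/andP; split => //; apply/andP; split.
  by apply/set0Pn; exists ord_max; rewrite inE.
by rewrite inE.
Qed.

Lemma sum_by_gcd m (F : nat -> nat) :
  \sum_(A in subsets_1m m) F (gcdset A) =
  \sum_(d < m.+1) #|[set A in subsets_1m m | gcdset A == d]| * F d.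
Proof.
rewrite (partition_big (fun A => inord (gcdset A) : 'I_m.+1) predT) //.
apply: eq_bigr => d _.
transitivity (\sum_(A in [set A in subsets_1m m | gcdset A == d]) F (gcdset A)).
  apply: eq_bigl => A; rewrite inE; case SA: (A \in subsets_1m m) => //=.
  have /andP[_ le] := gcdset_bounds SA.
  apply/eqP/eqP => [<-|e]; first by rewrite inordK.
  by apply: val_inj; rewrite /= inordK // e.
rewrite -sum_nat_const; apply: eq_bigr => A; rewrite inE => /andP[_ /eqP ->].
by [].
Qed.

Lemma Mbar_nat p : prime p -> Mbar p = p * f p + \sum_(2 <= j < p) f (p %/ j).
Proof.
move=> pp; have p1 := prime_gt1 pp.
have c0 : coprime 0 p = false by rewrite /coprime gcd0n gtn_eqF.
have cpp : coprime p p = false by rewrite /coprime gcdnn gtn_eqF.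
rewrite /Mbar big_mkcondr /=.
rewrite (sum_by_gcd p (fun d => if coprime d p then gcdn d.-1 p else 0)).
rewrite -(big_mkord xpredT (fun d => #|[set A in subsets_1m p | gcdset A == d]| *
   (if coprime d p then gcdn d.-1 p else 0))).
rewrite big_ltn // c0 muln0 add0n.
rewrite big_ltn; last by rewrite ltnS ltnW.
rewrite Ncount // divn1 coprime1n gcd0n mulnC; congr (_ + _).
rewrite big_nat_recr /=; last exact: p1.
rewrite cpp muln0 addn0.
apply: eq_big_nat => d /andP[d2 dp].
rewrite Ncount; last exact: ltnW.
have cop : forall k, 0 < k < p -> coprime k p.
  move=> k /andP[k0 kp]; rewrite coprime_sym prime_coprime //.
  by rewrite gtnNdvd.
rewrite cop ?dp ?andbT ?(ltnW d2) //.
rewrite (eqP (cop _ _)) ?muln1 //.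
apply/andP; split; first by rewrite -ltnS prednK // ltnW.
by rewrite (leq_ltn_trans (leq_pred d)).
Qed.

Theorem mainTheorem5 (p : nat) : prime p ->
  ((Mbar p)%:Z = (p * f p)%:Z - 1 + (\sum_(2 <= j < p.+1) f (p %/ j))%:Z)%R.
Proof.
move=> pp; have p1 := prime_gt1 pp.
rewrite Mbar_nat // big_nat_recr /=; last exact: p1.
rewrite divnn (ltnW p1) f1 /=.
rewrite !PoszD GRing.addrCA GRing.subrK GRing.addrC.
by [].
Qed.
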